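(* Let $n$ be even, and for $m\ge1$ let $\mathcal{C}_m=\mathbb{C}\{e_1,\dots,e_m\}$ denote the complex Clifford algebra with generators satisfying $e_j^2=-1$, $e_je_k=-e_ke_j$ ($j\ne k$), of dimension $2^m$, with $\mathcal{C}_n\subset\mathcal{C}_{n+2}$ naturally. Suppose there is an invertible $2^{n/2}\times2^{n/2}$ matrix $P_n$ over $\mathcal{C}_n$, not depending on $a$, such that for every $a\in\mathcal{C}_n$ the matrix $\phi_n(a):=P_n(aI_{2^{n/2}})P_n^{-1}$ has all entries in $\mathbb{C}$. Let $e_{[n]}=e_1\cdots e_n$, $e_{[n+1]}=e_1\cdots e_{n+1}=e_{[n]}e_{n+1}$, $\mu_{n+2}=(e_{[n]}e_{n+1})(e_{[n]}e_{n+2})$ and $r=(-1)^{\frac12(n+1)(n+2)}$; then $(e_{[n]}e_{n+1})^2=(e_{[n]}e_{n+2})^2=r$ and $\mu_{n+2}=-(e_{[n]}e_{n+2})(e_{[n]}e_{n+1})$. Fix a square root $\sqrt r\in\mathbb{C}$. Then every $a\in\mathcal{C}_{n+2}$ can be written as $$a=a_0+a_1e_{[n]}e_{n+1}+a_2e_{[n]}e_{n+2}+a_3\mu_{n+2}$$ with $a_0,\dots,a_3\in\mathcal{C}_n$. Let $N=2^{(n+2)/2}$ and $$P_{n+2}=\frac12\begin{pmatrix}(1+\frac1{\sqrt r}e_{[n+1]})P_n & (e_{[n]}e_{n+2}-\frac1{\sqrt r}\mu_{n+2})P_n\\ \frac1r(e_{[n]}e_{n+2}+\frac1{\sqrt r}\mu_{n+2})P_n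 & (1-\frac1{\sqrt r}e_{[n+1]})P_n\end{pmatrix},$$ $$P_{n+2}'=\frac12\begin{pmatrix}P_n^{-1}(1+\frac1{\sqrt r}e_{[n+1]}) & P_n^{-1}(e_{[n]}e_{n+2}-\frac1{\sqrt r}\mu_{n+2})\\ P_n^{-1}\frac1r(e_{[n]}e_{n+2}+\frac1{\sqrt r}\mu_{n+2}) & P_n^{-1}(1-\frac1{\sqrt r}e_{[n+1]})\end{pmatrix}.$$ Then $P_{n+2}$ is invertible with $P_{n+2}^{-1}=P_{n+2}'$, and $$P_{n+2}(aI_N)P_{n+2}^{-1}=\begin{pmatrix}\phi_n(a_0)+\sqrt r\,\phi_n(a_1) & r[\phi_n(a_2)+\sqrt r\,\phi_n(a_3)]\\ \phi_n(a_2)-\sqrt r\,\phi_n(a_3) & \phi_n(a_0)-\sqrt r\,\phi_n(a_1)\end{pmatrix}\in\mathbb{C}^{N\times N}.$$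
   Context: For an element $c$ and a matrix $M$, $cM$ (resp. $Mc$) denotes the matrix with entries $cM_{jk}$ (resp. $M_{jk}c$). Complex scalars commute with all Clifford elements. *)

(* Defs.v *)
From mathcomp Require Import all_boot all_algebra.
From mathcomp Require Import Rstruct complex.
Set Implicit Arguments. Unset Strict Implicit. Unset Printing Implicit Defensive.
Import GRing.Theory Num.Theory.
Local Open Scope ring_scope.

Definition Cplx : numClosedFieldType := (Rdefinitions.R)[i].

(* The complex Clifford algebra C_m = C{e_1,...,e_m}: an element is its family
   of coefficients on the basis blades e_A = e_{a_1} ... e_{a_k}
   (A = {a_1 < ... < a_k} a subset of {0..m-1}; generator e_{j+1} is index j). *)
Definition clif (m : nat) := {ffun {set 'I_m} -> Cplx}.

(* e_A e_B = clif_sign A B * e_(A symmetric-difference B), from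
   e_j^2 = -1 and e_j e_k = - e_k e_j (j <> k). *)
Definition clif_sign (m : nat) (A B : {set 'I_m}) : Cplx :=
  (-1) ^+ (#|[set p : 'I_m * 'I_m | (p.1 \in A) && (p.2 \in B) && (p.2 < p.1)%N]|
           + #|A :&: B|).

Definition symdiff (m : nat) (A B : {set 'I_m}) : {set 'I_m} :=
  (A :\: B) :|: (B :\: A).

Definition cmul (m : nat) (x y : clif m) : clif m :=
  [ffun S => \sum_(A : {set 'I_m}) \sum_(B : {set 'I_m} | symdiff A B == S)
                clif_sign A B * x A * y B].

Definition cscal (m : nat) (c : Cplx) : clif m :=
  [ffun S => if S == set0 then c else 0].
Definition cone (m : nat) : clif m := cscal m 1.
Definition cgen (m : nat) (j : 'I_m) : clif m :=
  [ffun S => if S == [set j] then 1 else 0].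

Definition is_cscal (m : nat) (x : clif m) : Prop := x = cscal m (x set0).
Definition cpart (m : nat) (x : clif m) : Cplx := x set0.

Definition ebig (n k : nat) : clif n.+2 :=
  foldr (@cmul n.+2) (cone n.+2) [seq cgen (inord i : 'I_n.+2) | i <- iota 0 k].
Definition egen (n j : nat) : clif n.+2 := cgen (inord j.-1 : 'I_n.+2).

Definition lift_clif (n : nat) (x : clif n) : clif n.+2 :=
  [ffun S : {set 'I_n.+2} =>
     if S \subset [set widen_ord (leqW (leqnSn n)) i | i : 'I_n]
     then x [set i : 'I_n | widen_ord (leqW (leqnSn n)) i \in S] else 0].

Definition cmxmul (m a b c : nat) (A : 'M[clif m]_(a, b)) (B : 'M[clif m]_(b, c))
  : 'M[clif m]_(a, c) :=
  \matrix_(i, j) \sum_(l < b) cmul (A i l) (B l j).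
Definition cmx_scalar (m k : nat) (x : clif m) : 'M[clif m]_k :=
  \matrix_(i, j) if i == j then x else 0.
Definition cmx1 (m k : nat) : 'M[clif m]_k := cmx_scalar k (cone m).
Definition cmx_lmul (m a b : nat) (c : clif m) (M : 'M[clif m]_(a, b)) :=
  map_mx (cmul c) M.
Definition cmx_rmul (m a b : nat) (M : 'M[clif m]_(a, b)) (c : clif m) :=
  map_mx (fun x => cmul x c) M.
Definition cmx_inverse (m k : nat) (P Q : 'M[clif m]_k) : Prop :=
  cmxmul P Q = cmx1 m k /\ cmxmul Q P = cmx1 m k.

Definition phi (n k : nat) (P Pinv : 'M[clif n]_k) (a : clif n) : 'M[Cplx]_k :=
  map_mx (@cpart n) (cmxmul (cmxmul P (cmx_scalar k a)) Pinv).

Definition rsign (n : nat) : Cplx := (-1) ^+ (((n.+1) * (n.+2))./2).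

Definition f1 (n : nat) : clif n.+2 := cmul (ebig n n) (egen n n.+1).
Definition f2 (n : nat) : clif n.+2 := cmul (ebig n n) (egen n n.+2).
Definition mu (n : nat) : clif n.+2 := cmul (f1 n) (f2 n).

Definition Pnext (n : nat) (s : Cplx) (Pn : 'M[clif n]_(2 ^ n./2))
  : 'M[clif n.+2]_(2 ^ n./2 + 2 ^ n./2) :=
  let P := map_mx (@lift_clif n) Pn in
  let ks := cscal n.+2 s^-1 in
  let ir := cscal n.+2 (rsign n)^-1 in
  cmx_lmul (cscal n.+2 2^-1)
    (block_mx
       (cmx_lmul (cone _ + cmul ks (ebig n n.+1)) P)
       (cmx_lmul (f2 n - cmul ks (mu n)) P)
       (cmx_lmul (cmul ir (f2 n + cmul ks (mu n))) P)
       (cmx_lmul (cone _ - cmul ks (ebig n n.+1)) P)).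

Definition Pprime (n : nat) (s : Cplx) (Pninv : 'M[clif n]_(2 ^ n./2))
  : 'M[clif n.+2]_(2 ^ n./2 + 2 ^ n./2) :=
  let Q := map_mx (@lift_clif n) Pninv in
  let ks := cscal n.+2 s^-1 in
  let ir := cscal n.+2 (rsign n)^-1 in
  cmx_lmul (cscal n.+2 2^-1)
    (block_mx
       (cmx_rmul Q (cone _ + cmul ks (ebig n n.+1)))
       (cmx_rmul Q (f2 n - cmul ks (mu n)))
       (cmx_rmul Q (cmul ir (f2 n + cmul ks (mu n))))
       (cmx_rmul Q (cone _ - cmul ks (ebig n n.+1)))).

(* Main.v *)
Require Import Defs.
From mathcomp Require Import all_boot all_algebra.
From mathcomp Require Import Rstruct complex.
From mathcomp Require Import ring.
Set Implicit Arguments. Unset Strict Implicit. Unset Printing Implicit Defensive.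
Import GRing.Theory Num.Theory.
Local Open Scope ring_scope.

Lemma in_symdiff m (A B : {set 'I_m}) x : (x \in symdiff A B) = (x \in A) (+) (x \in B).
Proof. by rewrite /symdiff !inE; case: (x \in A); case: (x \in B). Qed.

Lemma symdiffK m (A B : {set 'I_m}) : symdiff A (symdiff A B) = B.
Proof. by apply/setP => x; rewrite !in_symdiff addKb. Qed.

Lemma symdiffC m (A B : {set 'I_m}) : symdiff A B = symdiff B A.
Proof. by apply/setP => x; rewrite !in_symdiff addbC. Qed.

Lemma symdiffA m (A B C : {set 'I_m}) : symdiff A (symdiff B C) = symdiff (symdiff A B) C.
Proof. by apply/setP => x; rewrite !in_symdiff addbA. Qed.

Lemma symdiff0 m (A : {set 'I_m}) : symdiff A set0 = A.
Proof. by apply/setP => x; rewrite !in_symdiff inE addbF. Qed.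

Lemma symdiffv m (A : {set 'I_m}) : symdiff A A = set0.
Proof. by apply/setP => x; rewrite !in_symdiff inE addbb. Qed.

Lemma symdiff_eq m (A B S : {set 'I_m}) : (symdiff A B == S) = (B == symdiff A S).
Proof.
apply/eqP/eqP => [<-|->]; first by rewrite symdiffK.
by rewrite symdiffK.
Qed.

Lemma cmulE m (x y : clif m) S :
  cmul x y S = \sum_A clif_sign A (symdiff A S) * x A * y (symdiff A S).
Proof.
rewrite /cmul ffunE; apply: eq_bigr => A _.
rewrite (eq_bigl (fun B => B == symdiff A S)); last by move=> B; rewrite symdiff_eq.
by rewrite big_pred1_eq.
Qed.

Definition wsg m (a b : 'I_m) : Cplx := if (b <= a)%N then -1 else 1.
Definition sgnP m (A B : {set 'I_m}) : Cplx := \prod_(a in A) \prod_(b in B) wsg a b.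

Lemma wsg2 m (a b : 'I_m) : wsg a b * wsg a b = 1.
Proof. by rewrite /wsg; case: ifP => _; rewrite ?mulrNN mulr1. Qed.

Lemma clif_signE m (A B : {set 'I_m}) : clif_sign A B = sgnP A B.
Proof.
rewrite /clif_sign exprD -!prodr_const.
have -> : \prod_(i in [set p : 'I_m * 'I_m | (p.1 \in A) && (p.2 \in B) && (p.2 < p.1)%N]) (-1 : Cplx)
   = \prod_(a in A) \prod_(b in B) (if (b < a)%N then -1 else 1).
  rewrite pair_big_dep /=. rewrite big_mkcond /=. rewrite [in RHS]big_mkcond /=. apply: eq_bigr => p _.
  by rewrite inE; case: (p.1 \in A); case: (p.2 \in B); case: (p.2 < p.1)%N.
have -> : \prod_(i in A :&: B) (-1 : Cplx)
   = \prod_(a in A) \prod_(b in B) (if a == b then -1 else 1).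
  rewrite [RHS](eq_bigr (fun a => if a \in B then -1 else 1)); last first.
    move=> a _; rewrite -big_mkcondr /=.
    case: (boolP (a \in B)) => aB.
      rewrite (eq_bigl (fun b => b == a)) ?big_pred1_eq // => b.
      by rewrite eq_sym andbC; case: eqP => // ->.
    by rewrite big1 // => b /andP [bB /eqP ab]; move: aB; rewrite ab bB.
  by rewrite -big_mkcondr /=; apply: eq_bigl => a; rewrite inE.
rewrite -big_split /=; apply: eq_bigr => a _; rewrite -big_split /=.
apply: eq_bigr => b _; rewrite /wsg.
have [->|ab] := eqVneq a b; first by rewrite ltnn leqnn mul1r.
rewrite mulr1 [(b <= a)%N]leq_eqVlt; suff -> : (b == a :> nat) = false by [].
by apply/negbTE; rewrite eq_sym; apply: contra ab => /eqP/val_inj ->.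
Qed.

Lemma prod_symdiff m (f : 'I_m -> Cplx) (A B : {set 'I_m}) :
  (forall x, f x * f x = 1) ->
  \prod_(x in symdiff A B) f x = \prod_(x in A) f x * \prod_(x in B) f x.
Proof.
move=> hf; rewrite big_mkcond [X in X * _]big_mkcond [X in _ * X]big_mkcond -big_split /=.
apply: eq_bigr => x _; rewrite in_symdiff.
by case: (x \in A); case: (x \in B); rewrite /= ?mulr1 ?mul1r ?hf.
Qed.

Lemma sgnP_symdiffl m (A B C : {set 'I_m}) : sgnP (symdiff A B) C = sgnP A C * sgnP B C.
Proof.
rewrite /sgnP prod_symdiff // => x; rewrite -big_split /=; apply: big1 => y _; exact: wsg2.
Qed.

Lemma sgnP_symdiffr m (A B C : {set 'I_m}) : sgnP A (symdiff B C) = sgnP A B * sgnP A C.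
Proof.
rewrite /sgnP -big_split /=; apply: eq_bigr => a _; apply: prod_symdiff => x; exact: wsg2.
Qed.

Lemma sgnP2 m (A B : {set 'I_m}) : sgnP A B * sgnP A B = 1.
Proof.
rewrite /sgnP -big_split /=; apply: big1 => a _; rewrite -big_split /=; apply: big1 => b _.
exact: wsg2.
Qed.

Lemma sign_cocycle m (A B C : {set 'I_m}) :
  clif_sign A B * clif_sign (symdiff A B) C = clif_sign B C * clif_sign A (symdiff B C).
Proof.
rewrite !clif_signE sgnP_symdiffl sgnP_symdiffr.
by ring.
Qed.

Lemma symdiffKA m (A B C : {set 'I_m}) : symdiff (symdiff A B) (symdiff A C) = symdiff B C.
Proof. by apply/setP => x; rewrite !in_symdiff; case: (x \in A); case: (x \in B); case: (x \in C). Qed.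

Lemma symdiffKB m (A B C : {set 'I_m}) : symdiff (symdiff A B) (symdiff B C) = symdiff A C.
Proof. by apply/setP => x; rewrite !in_symdiff; case: (x \in A); case: (x \in B); case: (x \in C). Qed.

Lemma cmulA m (x y z : clif m) : cmul x (cmul y z) = cmul (cmul x y) z.
Proof.
apply/ffunP => S; rewrite !cmulE.
under eq_bigr do rewrite cmulE mulr_sumr.
under [RHS]eq_bigr do rewrite cmulE mulr_sumr mulr_suml.
rewrite [RHS]exchange_big /=; apply: eq_bigr => A _.
rewrite (reindex (fun B => symdiff A B)); last first.
  by exists (fun B => symdiff A B) => B _; rewrite symdiffK.
apply: eq_bigr => B _; rewrite symdiffKA.
have hc := sign_cocycle A (symdiff A B) (symdiff B S).
rewrite symdiffK symdiffKB in hc.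
transitivity (clif_sign A (symdiff A B) * clif_sign B (symdiff B S) * x A * y (symdiff A B) * z (symdiff B S)); last by ring.
by rewrite hc; ring.
Qed.

Definition csc m (c : Cplx) (x : clif m) : clif m := [ffun S => c * x S].
Definition blade m (K : {set 'I_m}) : clif m := [ffun S => if S == K then 1 else 0].

Lemma caddE m (x y : clif m) S : (x + y) S = x S + y S. Proof. by rewrite ffunE. Qed.
Lemma coppE m (x : clif m) S : (- x) S = - x S. Proof. by rewrite ffunE. Qed.
Lemma czeroE m S : (0 : clif m) S = 0. Proof. by rewrite ffunE. Qed.
Lemma cscE m c (x : clif m) S : csc c x S = c * x S. Proof. by rewrite ffunE. Qed.
Lemma bladeE m (K : {set 'I_m}) S : blade K S = if S == K then 1 else 0. Proof. by rewrite ffunE. Qed.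
Lemma cscalE m c S : cscal m c S = if S == set0 then c else 0. Proof. by rewrite ffunE. Qed.
Lemma csumE m (I : Type) (r : seq I) (P : pred I) (F : I -> clif m) S :
  (\sum_(i <- r | P i) F i) S = \sum_(i <- r | P i) F i S.
Proof. by rewrite sum_ffunE. Qed.

Lemma cmulDl m (x y z : clif m) : cmul (x + y) z = cmul x z + cmul y z.
Proof.
apply/ffunP => S; rewrite caddE !cmulE -big_split /=; apply: eq_bigr => A _.
by rewrite caddE; ring.
Qed.

Lemma cmulDr m (x y z : clif m) : cmul z (x + y) = cmul z x + cmul z y.
Proof.
apply/ffunP => S; rewrite caddE !cmulE -big_split /=; apply: eq_bigr => A _.
by rewrite caddE; ring.
Qed.

Lemma cmul0l m (x : clif m) : cmul 0 x = 0.
Proof. by apply/ffunP => S; rewrite czeroE cmulE big1 // => A _; rewrite czeroE; ring. Qed.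

Lemma cmul0r m (x : clif m) : cmul x 0 = 0.
Proof. by apply/ffunP => S; rewrite czeroE cmulE big1 // => A _; rewrite czeroE; ring. Qed.

Lemma cmulNl m (x y : clif m) : cmul (- x) y = - cmul x y.
Proof.
apply/ffunP => S; rewrite coppE !cmulE -sumrN; apply: eq_bigr => A _.
by rewrite coppE; ring.
Qed.

Lemma cmulNr m (x y : clif m) : cmul y (- x) = - cmul y x.
Proof.
apply/ffunP => S; rewrite coppE !cmulE -sumrN; apply: eq_bigr => A _.
by rewrite coppE; ring.
Qed.

Lemma cmulBl m (x y z : clif m) : cmul (x - y) z = cmul x z - cmul y z.
Proof. by rewrite cmulDl cmulNl. Qed.

Lemma cmulBr m (x y z : clif m) : cmul z (x - y) = cmul z x - cmul z y.
Proof. by rewrite cmulDr cmulNr. Qed.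

Lemma cmul_sumr m (I : Type) (r : seq I) (P : pred I) (F : I -> clif m) x :
  cmul x (\sum_(i <- r | P i) F i) = \sum_(i <- r | P i) cmul x (F i).
Proof. apply: (big_morph (cmul x)); [by move=> a b; rewrite cmulDr | exact: cmul0r]. Qed.

Lemma cmul_suml m (I : Type) (r : seq I) (P : pred I) (F : I -> clif m) x :
  cmul (\sum_(i <- r | P i) F i) x = \sum_(i <- r | P i) cmul (F i) x.
Proof. apply: (big_morph (fun y => cmul y x)); [by move=> a b; rewrite cmulDl | exact: cmul0l]. Qed.

Lemma cmul_csc_l m c (x y : clif m) : cmul (csc c x) y = csc c (cmul x y).
Proof.
apply/ffunP => S; rewrite cscE !cmulE mulr_sumr; apply: eq_bigr => A _.
by rewrite cscE; ring.
Qed.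

Lemma cmul_csc_r m c (x y : clif m) : cmul x (csc c y) = csc c (cmul x y).
Proof.
apply/ffunP => S; rewrite cscE !cmulE mulr_sumr; apply: eq_bigr => A _.
by rewrite cscE; ring.
Qed.

Lemma sgnP0l m (B : {set 'I_m}) : sgnP set0 B = 1.
Proof. by rewrite /sgnP big_pred0 // => a; rewrite inE. Qed.

Lemma sgnP0r m (B : {set 'I_m}) : sgnP B set0 = 1.
Proof. by rewrite /sgnP big1 // => a _; rewrite big_pred0 // => b; rewrite inE. Qed.

Lemma cmul_blade_l m (K : {set 'I_m}) x S :
  cmul (blade K) x S = clif_sign K (symdiff K S) * x (symdiff K S).
Proof.
rewrite cmulE (bigD1 K) //= big1 ?addr0; first by rewrite bladeE eqxx mulr1.
by move=> A /negbTE hA; rewrite bladeE hA; ring.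
Qed.

Lemma cmul_blade_r m (K : {set 'I_m}) x S :
  cmul x (blade K) S = clif_sign (symdiff S K) K * x (symdiff S K).
Proof.
rewrite cmulE (bigD1 (symdiff S K)) //= big1 ?addr0.
  have -> : symdiff (symdiff S K) S = K by apply/setP => y; rewrite !in_symdiff; case: (y \in S); case: (y \in K).
  by rewrite bladeE eqxx mulr1.
move=> A hA; rewrite bladeE; case: eqP; last by move=> _; ring.
move=> e; move: hA; rewrite -e; rewrite eq_sym; move/eqP; case.
by apply/setP => y; rewrite !in_symdiff; case: (y \in S); case: (y \in A).
Qed.

Lemma blade_mul m (A B : {set 'I_m}) :
  cmul (blade A) (blade B) = csc (clif_sign A B) (blade (symdiff A B)).
Proof.
apply/ffunP => S; rewrite cmul_blade_l cscE !bladeE.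
have -> : (symdiff A S == B) = (S == symdiff A B) by rewrite symdiff_eq.
case: eqP => [->|_]; last by rewrite !mulr0.
by rewrite symdiffK !mulr1.
Qed.

Lemma cscal_csc m c : cscal m c = csc c (cone m).
Proof. by apply/ffunP => S; rewrite cscalE cscE /cone cscalE; case: eqP; rewrite ?mulr1 ?mulr0. Qed.

Lemma cone_blade m : cone m = blade set0.
Proof. by []. Qed.

Lemma cmul1l m (x : clif m) : cmul (cone m) x = x.
Proof.
apply/ffunP => S; rewrite cone_blade cmul_blade_l clif_signE sgnP0l mul1r.
by rewrite symdiffC symdiff0.
Qed.

Lemma cmul1r m (x : clif m) : cmul x (cone m) = x.
Proof.
apply/ffunP => S; rewrite cone_blade cmul_blade_r clif_signE sgnP0r mul1r.
by rewrite symdiff0.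
Qed.

Lemma cmul_cscal_l m c (x : clif m) : cmul (cscal m c) x = csc c x.
Proof. by rewrite cscal_csc cmul_csc_l cmul1l. Qed.

Lemma cmul_cscal_r m c (x : clif m) : cmul x (cscal m c) = csc c x.
Proof. by rewrite cscal_csc cmul_csc_r cmul1r. Qed.

Lemma cscD m c (x y : clif m) : csc c (x + y) = csc c x + csc c y.
Proof. by apply/ffunP => S; rewrite !ffunE mulrDr. Qed.
Lemma cscN m c (x : clif m) : csc c (- x) = - csc c x.
Proof. by apply/ffunP => S; rewrite !ffunE mulrN. Qed.
Lemma cscB m c (x y : clif m) : csc c (x - y) = csc c x - csc c y.
Proof. by rewrite cscD cscN. Qed.
Lemma csc0 m c : csc c (0 : clif m) = 0.
Proof. by apply/ffunP => S; rewrite !ffunE mulr0. Qed.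
Lemma csc0l m (x : clif m) : csc 0 x = 0.
Proof. by apply/ffunP => S; rewrite !ffunE mul0r. Qed.
Lemma cscDl m c d (x : clif m) : csc (c + d) x = csc c x + csc d x.
Proof. by apply/ffunP => S; rewrite !ffunE mulrDl. Qed.
Lemma cscNl m c (x : clif m) : csc (- c) x = - csc c x.
Proof. by apply/ffunP => S; rewrite !ffunE mulNr. Qed.
Lemma csc_mul m c d (x : clif m) : csc c (csc d x) = csc (c * d) x.
Proof. by apply/ffunP => S; rewrite !ffunE mulrA. Qed.
Lemma csc1 m (x : clif m) : csc 1 x = x.
Proof. by apply/ffunP => S; rewrite !ffunE mul1r. Qed.
Lemma csc_sum m c (I : Type) (r : seq I) (P : pred I) (F : I -> clif m) :
  csc c (\sum_(i <- r | P i) F i) = \sum_(i <- r | P i) csc c (F i).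
Proof. apply: (big_morph (csc c)); [by move=> a b; rewrite cscD | exact: csc0]. Qed.

Definition Ik m (k : nat) : {set 'I_m} := [set i : 'I_m | (i < k)%N].

Lemma card_Ik m k : (k <= m)%N -> #|Ik m k| = k.
Proof.
move=> km; rewrite -sum1_card /Ik.
rewrite (eq_bigl (fun i : 'I_m => (i < k)%N)); last by move=> i; rewrite inE.
by rewrite -(big_ord_widen m (fun _ => 1%N)) // sum1_card card_ord.
Qed.

Lemma foldr_cmul m (s : seq (clif m)) z :
  foldr (@cmul m) z s = cmul (foldr (@cmul m) (cone m) s) z.
Proof.
elim: s => [|x s IH] /=; first by rewrite cmul1l.
by rewrite IH cmulA.
Qed.

Lemma ebigS n k : ebig n k.+1 = cmul (ebig n k) (cgen (inord k : 'I_n.+2)).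
Proof.
rewrite /ebig -[k.+1]addn1 iotaD map_cat foldr_cat /= add0n.
by rewrite foldr_cmul cmul1r.
Qed.

Lemma cgen_blade m (j : 'I_m) : cgen j = blade [set j].
Proof. by []. Qed.

Lemma sgnP1 m (j : 'I_m) : sgnP [set j] [set j] = -1.
Proof. by rewrite /sgnP !big_set1 /wsg leqnn. Qed.

Lemma sgnP_Ik_1 m k (j : 'I_m) : (k <= j)%N -> sgnP (Ik m k) [set j] = 1.
Proof.
move=> kj; rewrite /sgnP big1 // => a; rewrite inE big_set1 /wsg => ak.
by rewrite leqNgt (leq_trans ak kj).
Qed.

Lemma sgnP_1_Ik m k (j : 'I_m) : (k <= j)%N -> (k <= m)%N ->
  sgnP [set j] (Ik m k) = (-1) ^+ k.
Proof.
move=> kj km; rewrite /sgnP big_set1.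
rewrite (eq_bigr (fun _ => -1)); last first.
  by move=> b; rewrite inE /wsg => bk; rewrite ltnW // (leq_trans bk kj).
by rewrite prodr_const card_Ik.
Qed.

Lemma sgnP_lt m (i j : 'I_m) : (i < j)%N -> sgnP [set i] [set j] = 1 /\ sgnP [set j] [set i] = -1.
Proof. by move=> ij; rewrite /sgnP !big_set1 /wsg leqNgt ij ltnW. Qed.

Lemma IkS m k : (k < m.+1)%N -> Ik m.+1 k.+1 = symdiff (Ik m.+1 k) [set inord k].
Proof.
move=> km; apply/setP => x; rewrite in_symdiff !inE -val_eqE /= inordK //.
by rewrite ltnS leq_eqVlt; case: ltngtP.
Qed.

Lemma ebig_blade n k : (k <= n.+2)%N -> ebig n k = blade (Ik n.+2 k).
Proof.
elim: k => [|k IH] hk.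
  rewrite /ebig /= cone_blade; congr blade; apply/setP => x; rewrite !inE //.
rewrite ebigS IH ?(ltnW hk) // cgen_blade blade_mul clif_signE.
rewrite sgnP_Ik_1 ?inordK // csc1 IkS //.
Qed.

Lemma half_step k : (k.+1 * k.+2)./2 = ((k * k.+1)./2 + k.+1)%N.
Proof.
have e : (k.+1 * k.+2 = k * k.+1 + (k.+1).*2)%N.
  by rewrite -muln2 [(k * _)%N]mulnC -mulnDr addn2.
by rewrite e halfD odd_double andbF add0n doubleK.
Qed.

Lemma sgnP_Ik m k : (k <= m.+1)%N -> sgnP (Ik m.+1 k) (Ik m.+1 k) = (-1) ^+ (k * k.+1)./2.
Proof.
elim: k => [|k IH] hk.
  by rewrite /sgnP big_pred0 // => x; rewrite inE.
rewrite (IkS hk) sgnP_symdiffl !sgnP_symdiffr (IH (ltnW hk)).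
have hk' : (k <= (inord k : 'I_m.+1))%N by rewrite inordK.
rewrite (sgnP_Ik_1 hk') (sgnP_1_Ik hk' (ltnW hk)) sgnP1.
by rewrite half_step exprD exprS mulr1 [_ * -1]mulrC.
Qed.

Lemma sgnP_comm m (U K : {set 'I_m}) : U \subset K -> odd #|K| -> sgnP U K = sgnP K U.
Proof.
move=> UK oK.
have h : sgnP U K * sgnP K U = 1.
  rewrite /sgnP [X in _ * X]exchange_big -big_split /=; apply: big1 => u uU.
  rewrite -big_split /=.
  have uK : u \in K by apply: (subsetP UK).
  rewrite (big_setD1 u uK) /= /wsg leqnn mulrNN mulr1 mul1r.
  rewrite (eq_bigr (fun _ => -1)); last first.
    move=> k; rewrite !inE => /andP [ku _].
    have : (u : nat) != k by apply: contra ku => /eqP/val_inj ->.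
    by case: ltngtP => // hh _; rewrite ?mulrN1 ?mulN1r ?opprK ?mul1r ?mulr1.
  rewrite prodr_const -signr_odd.
  by move: oK; rewrite (cardsD1 u K) uK add1n oddS => /negbTE ->; rewrite expr0.
have h2 := sgnP2 K U.
by rewrite -[sgnP U K]mulr1 -h2 mulrA h mul1r.
Qed.

Definition wid n : 'I_n -> 'I_n.+2 := widen_ord (leqW (leqnSn n)).

Lemma wid_inj n : injective (@wid n).
Proof. by move=> a b /(congr1 val) /= /val_inj. Qed.

Lemma Wset_I0 n : [set wid i | i : 'I_n] = Ik n.+2 n.
Proof.
apply/setP => x; rewrite !inE; apply/imsetP/idP => [[y _ ->] | h] /=; first by [].
by exists (Ordinal h) => //; apply: val_inj.
Qed.

Lemma clliftE n (x : clif n) S :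
  lift_clif x S = if S \subset Ik n.+2 n then x [set i : 'I_n | wid i \in S] else 0.
Proof. by rewrite ffunE -Wset_I0. Qed.

Lemma lift_comm_blade n (y : clif n) (K : {set 'I_n.+2}) :
  Ik n.+2 n \subset K -> odd #|K| ->
  cmul (lift_clif y) (blade K) = cmul (blade K) (lift_clif y).
Proof.
move=> sK oK; apply/ffunP => S; rewrite cmul_blade_r cmul_blade_l (symdiffC K S) !clliftE.
case: ifP => [hs|]; last by rewrite !mulr0.
rewrite !clif_signE sgnP_comm //; exact: subset_trans hs sK.
Qed.

Definition jn n : 'I_n.+2 := inord n.
Definition jn1 n : 'I_n.+2 := inord n.+1.
Definition I0 n : {set 'I_n.+2} := Ik n.+2 n.
Definition I1 n : {set 'I_n.+2} := Ik n.+2 n.+1.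
Definition J2 n : {set 'I_n.+2} := symdiff (I0 n) [set jn1 n].

Lemma jnE n : (jn n : nat) = n. Proof. by rewrite /jn inordK. Qed.
Lemma jn1E n : (jn1 n : nat) = n.+1. Proof. by rewrite /jn1 inordK. Qed.

Lemma I1E n : I1 n = symdiff (I0 n) [set jn n].
Proof. by rewrite /I1 IkS. Qed.

Lemma f1_blade n : f1 n = blade (I1 n).
Proof.
rewrite /f1; have -> : egen n n.+1 = blade [set jn n] by [].
rewrite (@ebig_blade n n (leqW (leqnSn n))) blade_mul clif_signE.
by rewrite sgnP_Ik_1 ?jnE // csc1 I1E.
Qed.

Lemma f2_blade n : f2 n = blade (J2 n).
Proof.
rewrite /f2; have -> : egen n n.+2 = blade [set jn1 n] by [].
rewrite (@ebig_blade n n (leqW (leqnSn n))) blade_mul clif_signE.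
by rewrite sgnP_Ik_1 ?jn1E // csc1.
Qed.

Lemma sgn_expand n (j j' : 'I_n.+2) : (n <= j)%N -> (n <= j')%N ->
  sgnP (symdiff (I0 n) [set j]) (symdiff (I0 n) [set j'])
  = sgnP (I0 n) (I0 n) * (-1) ^+ n * sgnP [set j] [set j'].
Proof.
move=> hj hj'; rewrite sgnP_symdiffl !sgnP_symdiffr /I0.
rewrite (sgnP_Ik_1 hj') (sgnP_1_Ik hj (leqW (leqnSn n))).
by rewrite mulr1 mulrA.
Qed.

Lemma card_I1 n : #|I1 n| = n.+1.
Proof. by rewrite card_Ik. Qed.

Lemma card_J2 n : #|J2 n| = n.+1.
Proof.
rewrite (cardsD1 (jn1 n)) /J2 in_symdiff !inE -val_eqE /= jn1E ltnNge leqnSn eqxx /=.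
have -> : symdiff (I0 n) [set jn1 n] :\ jn1 n = I0 n.
  apply/setP => x; rewrite in_setD1 in_symdiff !inE -!val_eqE /= jn1E.
  by case: eqP => [->|_] /=; [rewrite ltnNge leqnSn | rewrite addbF].
by rewrite /I0 card_Ik // leqW.
Qed.

Lemma I0_sub_I1 n : I0 n \subset I1 n.
Proof. by apply/subsetP => x; rewrite !inE => /ltnW. Qed.

Lemma I0_sub_J2 n : I0 n \subset J2 n.
Proof.
apply/subsetP => x; rewrite /J2 in_symdiff !inE -val_eqE /= jn1E => h.
by rewrite h (ltn_eqF (ltn_trans h (ltnSn n))).
Qed.

Lemma csc_cone m c : csc c (cone m) = cscal m c.
Proof. by rewrite cscal_csc. Qed.

Lemma sgnI1I1 n : sgnP (I1 n) (I1 n) = rsign n.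
Proof. by rewrite /I1 sgnP_Ik. Qed.

Lemma f1f1 n : cmul (f1 n) (f1 n) = cscal n.+2 (rsign n).
Proof.
by rewrite f1_blade blade_mul symdiffv -cone_blade clif_signE sgnI1I1 csc_cone.
Qed.

Lemma jn_le n : (n <= jn n)%N. Proof. by rewrite jnE. Qed.
Lemma jn1_le n : (n <= jn1 n)%N. Proof. by rewrite jn1E. Qed.
Lemma jn_lt n : (jn n < jn1 n)%N. Proof. by rewrite jnE jn1E. Qed.

Lemma f2f2 n : cmul (f2 n) (f2 n) = cscal n.+2 (rsign n).
Proof.
rewrite f2_blade blade_mul symdiffv -cone_blade clif_signE -sgnI1I1 I1E /J2.
by rewrite !sgn_expand ?jn_le ?jn1_le // !sgnP1 csc_cone.
Qed.

Lemma f2f1 n : cmul (f2 n) (f1 n) = - cmul (f1 n) (f2 n).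
Proof.
rewrite f1_blade f2_blade !blade_mul (symdiffC (J2 n)) -cscNl !clif_signE I1E /J2.
rewrite !sgn_expand ?jn_le ?jn1_le //.
have [h1 h2] := sgnP_lt (jn_lt n).
by rewrite h1 h2 mulrN1 mulr1.
Qed.

Lemma mu_neg n : mu n = - cmul (f2 n) (f1 n).
Proof. by rewrite f2f1 opprK. Qed.

Lemma clliftD n (x y : clif n) : lift_clif (x + y) = lift_clif x + lift_clif y.
Proof.
apply/ffunP => S; rewrite caddE !clliftE; case: ifP => _; last by rewrite addr0.
by rewrite caddE.
Qed.

Lemma clliftN n (x : clif n) : lift_clif (- x) = - lift_clif x.
Proof.
apply/ffunP => S; rewrite coppE !clliftE; case: ifP => _; last by rewrite oppr0.
by rewrite coppE.
Qed.

Lemma cllift0 n : lift_clif (0 : clif n) = 0.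
Proof. by apply/ffunP => S; rewrite czeroE clliftE czeroE; case: ifP. Qed.

Lemma lift_csc n c (x : clif n) : lift_clif (csc c x) = csc c (lift_clif x).
Proof.
apply/ffunP => S; rewrite cscE !clliftE; case: ifP => _; last by rewrite mulr0.
by rewrite cscE.
Qed.

Lemma lift_sum n (I : Type) (r : seq I) (P : pred I) (F : I -> clif n) :
  lift_clif (\sum_(i <- r | P i) F i) = \sum_(i <- r | P i) lift_clif (F i).
Proof. apply: (big_morph (@lift_clif n)); [exact: clliftD | exact: cllift0]. Qed.

Lemma pre_set0 n (S : {set 'I_n.+2}) : S \subset Ik n.+2 n ->
  ([set i : 'I_n | wid i \in S] == set0) = (S == set0).
Proof.
move=> hS; apply/eqP/eqP => [h|->]; last by apply/setP => i; rewrite !inE.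
apply/setP => x; rewrite inE; apply/negbTE/negP => xS.
have : x \in Ik n.+2 n by apply: (subsetP hS).
rewrite inE => xn.
have : Ordinal xn \in [set i : 'I_n | wid i \in S].
  by rewrite inE; have -> : wid (Ordinal xn) = x by apply: val_inj.
by rewrite h inE.
Qed.

Lemma lift_cscal n c : lift_clif (cscal n c) = cscal n.+2 c.
Proof.
apply/ffunP => S; rewrite clliftE !cscalE; case: ifP => hS; first by rewrite pre_set0.
case: eqP => // e; move: hS; rewrite e; by rewrite sub0set.
Qed.

Lemma lift_cone n : lift_clif (cone n) = cone n.+2.
Proof. exact: lift_cscal. Qed.

Lemma pre_img n (B : {set 'I_n}) : [set i : 'I_n | wid i \in [set wid x | x in B]] = B.
Proof. by apply/setP => i; rewrite inE (mem_imset _ _ (@wid_inj n)). Qed.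

Lemma img_sub n (B : {set 'I_n}) : [set wid x | x in B] \subset Ik n.+2 n.
Proof. by apply/subsetP => y /imsetP [x _ ->]; rewrite inE /= ltn_ord. Qed.

Lemma img_pre n (S : {set 'I_n.+2}) : S \subset Ik n.+2 n ->
  [set wid x | x in [set i : 'I_n | wid i \in S]] = S.
Proof.
move=> hS; apply/setP => y; apply/imsetP/idP => [[x] | yS].
  by rewrite inE => h ->.
have : y \in Ik n.+2 n by apply: (subsetP hS).
rewrite inE => yn; exists (Ordinal yn); last by apply: val_inj.
by rewrite inE; have -> : wid (Ordinal yn) = y by apply: val_inj.
Qed.

Lemma img_symdiff n (A B : {set 'I_n}) :
  [set wid x | x in symdiff A B] = symdiff [set wid x | x in A] [set wid x | x in B].
Proof.
apply/setP => y; rewrite in_symdiff.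
case: (boolP (y \in Ik n.+2 n)) => hy.
  have /imsetP [x _ ->] : y \in [set wid x | x : 'I_n] by rewrite Wset_I0.
  by rewrite !(mem_imset _ _ (@wid_inj n)) in_symdiff.
have h : forall C : {set 'I_n}, (y \in [set wid x | x in C]) = false.
  move=> C; apply/negbTE; apply: contra hy => hh.
  by apply: (subsetP (img_sub C)).
by rewrite !h.
Qed.

Lemma sgn_img n (A B : {set 'I_n}) :
  sgnP [set wid x | x in A] [set wid x | x in B] = sgnP A B.
Proof.
rewrite /sgnP big_imset /=; last by move=> a b _ _; apply: wid_inj.
apply: eq_bigr => a _; rewrite big_imset /=; last by move=> u v _ _; apply: wid_inj.
by apply: eq_bigr.
Qed.

Lemma lift_img n (x : clif n) (B : {set 'I_n}) : lift_clif x [set wid i | i in B] = x B.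
Proof. by rewrite clliftE img_sub pre_img. Qed.

Lemma lift_mul n (x y : clif n) : lift_clif (cmul x y) = cmul (lift_clif x) (lift_clif y).
Proof.
apply/ffunP => S; rewrite clliftE [RHS]cmulE; case: ifP => hS; last first.
  symmetry; apply: big1 => A _; rewrite !clliftE.
  case: ifP => hA; last by rewrite mulr0 mul0r.
  case: ifP => hAS; last by rewrite mulr0.
  move/negbT: hS; case/negP; rewrite -(symdiffK A S).
  by apply/subsetP => z; rewrite in_symdiff; case: (boolP (z \in A)) => zA /=;
    [move=> _; apply: (subsetP hA) | apply: (subsetP hAS)].
rewrite [RHS](bigID (fun A : {set 'I_n.+2} => A \subset Ik n.+2 n)) /= [X in _ + X]big1 ?addr0; last first.
  by move=> A /negbTE hA; rewrite clliftE hA mulr0 mul0r.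
rewrite (eq_bigl (fun A => A \in [set [set wid x | x in B] | B : {set 'I_n}])); last first.
  move=> A; apply/idP/imsetP => [hA | [B _ ->]]; last exact: img_sub.
  by exists [set i : 'I_n | wid i \in A]; rewrite ?inE // img_pre.
rewrite big_imset /=; last by move=> u v _ _; apply: imset_inj; apply: wid_inj.
rewrite cmulE; apply: eq_bigr => A _.
set S' := [set i : 'I_n | wid i \in S].
have eS : S = [set wid x | x in S'] by rewrite img_pre.
rewrite [in RHS]eS -img_symdiff !lift_img !clif_signE sgn_img.
done.
Qed.

Lemma lift_f1 n (y : clif n) : ~~ odd n ->
  cmul (lift_clif y) (f1 n) = cmul (f1 n) (lift_clif y).
Proof.
move=> hn; rewrite f1_blade; apply: lift_comm_blade; first exact: I0_sub_I1.
by rewrite card_I1 /= hn.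
Qed.

Lemma lift_f2 n (y : clif n) : ~~ odd n ->
  cmul (lift_clif y) (f2 n) = cmul (f2 n) (lift_clif y).
Proof.
move=> hn; rewrite f2_blade; apply: lift_comm_blade; first exact: I0_sub_J2.
by rewrite card_J2 /= hn.
Qed.

Lemma lift_mu n (y : clif n) : ~~ odd n ->
  cmul (lift_clif y) (mu n) = cmul (mu n) (lift_clif y).
Proof.
by move=> hn; rewrite /mu cmulA lift_f1 // -cmulA lift_f2 // cmulA.
Qed.

Lemma lift_blade n (B : {set 'I_n}) : lift_clif (blade B) = blade [set wid x | x in B].
Proof.
apply/ffunP => T; rewrite clliftE !bladeE; case: ifP => hT.
  have -> : (T == [set wid x | x in B]) = ([set i | wid i \in T] == B); last by [].
  rewrite -{1}(img_pre hT); apply/eqP/eqP => [h|->] //.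
  by apply: (imset_inj (@wid_inj n)).
case: eqP => // e; move: hT; by rewrite e img_sub.
Qed.

Lemma blade_split n (S K : {set 'I_n.+2}) : symdiff S K \subset Ik n.+2 n ->
  blade S = csc (sgnP (symdiff S K) K)
     (cmul (lift_clif (blade [set i : 'I_n | wid i \in symdiff S K])) (blade K)).
Proof.
move=> hU; rewrite lift_blade img_pre // blade_mul clif_signE csc_mul sgnP2 csc1.
congr blade; apply/setP => y; rewrite !in_symdiff; by case: (y \in S); case: (y \in K).
Qed.

Lemma ord3 n (y : 'I_n.+2) : [|| (y < n)%N, y == jn n | y == jn1 n].
Proof.
rewrite -!val_eqE /= jnE jn1E.
by case: (ltngtP y n) => //= h; rewrite (eqn_leq y) h /= -ltnS ltn_ord.
Qed.

Lemma sub_I0 n (U : {set 'I_n.+2}) : jn n \notin U -> jn1 n \notin U -> U \subset Ik n.+2 n.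
Proof.
move=> h1 h2; apply/subsetP => y yU; rewrite inE.
by case/or3P: (ord3 y) => // /eqP e; [move: h1 | move: h2]; rewrite -e yU.
Qed.

Definition decomp n (a : clif n.+2) := exists a0 a1 a2 a3 : clif n,
  a = lift_clif a0 + cmul (lift_clif a1) (f1 n)
      + cmul (lift_clif a2) (f2 n) + cmul (lift_clif a3) (mu n).

Lemma decomp0 n : decomp (0 : clif n.+2).
Proof. by exists 0, 0, 0, 0; rewrite cllift0 !cmul0l !addr0. Qed.

Lemma decompD n (a b : clif n.+2) : decomp a -> decomp b -> decomp (a + b).
Proof.
move=> [a0 [a1 [a2 [a3 ->]]]] [b0 [b1 [b2 [b3 ->]]]].
exists (a0 + b0), (a1 + b1), (a2 + b2), (a3 + b3); rewrite !clliftD !cmulDl.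
by rewrite [LHS]addrACA [X in X + _]addrACA [X in X + _ + _]addrACA.
Qed.

Lemma decompZ n c (a : clif n.+2) : decomp a -> decomp (csc c a).
Proof.
move=> [a0 [a1 [a2 [a3 ->]]]].
exists (csc c a0), (csc c a1), (csc c a2), (csc c a3).
by rewrite !lift_csc !cmul_csc_l !cscD.
Qed.

Lemma in_I1 n : (jn n \in I1 n) && (jn1 n \notin I1 n).
Proof. by rewrite !inE jnE jn1E ltnSn ltnn. Qed.

Lemma in_J2 n : (jn n \notin J2 n) && (jn1 n \in J2 n).
Proof.
rewrite /J2 !in_symdiff !inE -!val_eqE /= jnE jn1E ltnn eqxx /=.
by rewrite ltnNge leqnSn /= neq_ltn ltnSn.
Qed.

Lemma mu_blade n : mu n = csc (sgnP (I1 n) (J2 n)) (blade (symdiff (I1 n) (J2 n))).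
Proof. by rewrite /mu f1_blade f2_blade blade_mul clif_signE. Qed.

Lemma decomp_blade n (S : {set 'I_n.+2}) : decomp (blade S).
Proof.
have hsub : forall K : {set 'I_n.+2}, (jn n \in S) = (jn n \in K) -> (jn1 n \in S) = (jn1 n \in K) ->
    symdiff S K \subset Ik n.+2 n.
  by move=> K h1 h2; apply: sub_I0; rewrite in_symdiff ?h1 ?h2 addbb.
case/andP: (in_I1 n) => i1 i2; case/andP: (in_J2 n) => j1 j2.
case e1: (jn n \in S); case e2: (jn1 n \in S).
- have hK : symdiff S (symdiff (I1 n) (J2 n)) \subset Ik n.+2 n.
    by apply: hsub; rewrite in_symdiff ?e1 ?e2 ?i1 ?j2 ?(negbTE i2) ?(negbTE j1).
  rewrite (blade_split hK).
  set b := blade _; set sg := sgnP _ _.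
  exists 0, 0, 0, (csc (sg * sgnP (I1 n) (J2 n)) b).
  rewrite cllift0 !cmul0l !add0r lift_csc cmul_csc_l mu_blade cmul_csc_r csc_mul.
  by rewrite -mulrA sgnP2 mulr1.
- have hK : symdiff S (I1 n) \subset Ik n.+2 n.
    by apply: hsub; rewrite ?e1 ?e2 ?i1 ?(negbTE i2).
  rewrite (blade_split hK); set b := blade _; set sg := sgnP _ _.
  exists 0, (csc sg b), 0, 0.
  by rewrite cllift0 !cmul0l !add0r !addr0 lift_csc cmul_csc_l f1_blade.
- have hK : symdiff S (J2 n) \subset Ik n.+2 n.
    by apply: hsub; rewrite ?e1 ?e2 ?j2 ?(negbTE j1).
  rewrite (blade_split hK); set b := blade _; set sg := sgnP _ _.
  exists 0, 0, (csc sg b), 0.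
  by rewrite cllift0 !cmul0l !add0r !addr0 lift_csc cmul_csc_l f2_blade.
- have hK : S \subset Ik n.+2 n by apply: sub_I0; rewrite ?e1 ?e2.
  exists (blade [set i : 'I_n | wid i \in S]), 0, 0, 0.
  by rewrite cllift0 !cmul0l !addr0 lift_blade img_pre.
Qed.

Lemma clif_expand m (a : clif m) : a = \sum_S csc (a S) (blade S).
Proof.
apply/ffunP => T; rewrite csumE (bigD1 T) //= big1 ?addr0.
  by rewrite cscE bladeE eqxx mulr1.
by move=> S /negbTE h; rewrite cscE bladeE eq_sym h mulr0.
Qed.

Lemma decomp_all n (a : clif n.+2) : decomp a.
Proof.
rewrite (clif_expand a); apply: (big_ind (@decomp n)).
- exact: decomp0.
- exact: decompD.
- by move=> S _; apply: decompZ; apply: decomp_blade.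
Qed.

Record quad := Quad { q0 : Cplx; q1 : Cplx; q2 : Cplx; q3 : Cplx }.

Definition lin4 n (p : quad) : clif n.+2 :=
  csc (q0 p) (cone _) + csc (q1 p) (f1 n) + csc (q2 p) (f2 n) + csc (q3 p) (mu n).

Lemma lin4D n p q : lin4 n p + lin4 n q =
  lin4 n (Quad (q0 p + q0 q) (q1 p + q1 q) (q2 p + q2 q) (q3 p + q3 q)).
Proof.
rewrite /lin4 /= !cscDl.
by rewrite [LHS]addrACA [X in X + _]addrACA [X in X + _ + _]addrACA.
Qed.

Lemma lin4Z n c p : csc c (lin4 n p) =
  lin4 n (Quad (c * q0 p) (c * q1 p) (c * q2 p) (c * q3 p)).
Proof. by rewrite /lin4 /= !cscD !csc_mul. Qed.

Lemma lin4N n p : - lin4 n p =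
  lin4 n (Quad (- q0 p) (- q1 p) (- q2 p) (- q3 p)).
Proof. by rewrite /lin4 /= !cscNl !opprD. Qed.

Lemma lin4_ext n p q : q0 p = q0 q -> q1 p = q1 q -> q2 p = q2 q -> q3 p = q3 q ->
  lin4 n p = lin4 n q.
Proof. by case: p => a b c d; case: q => a' b' c' d' /= -> -> -> ->. Qed.

Lemma lin4_0 n (u : clif n.+2) : csc 0 u = 0. Proof. exact: csc0l. Qed.

Lemma lin4_e0 n a : lin4 n (Quad a 0 0 0) = csc a (cone _).
Proof. by rewrite /lin4 /= !csc0l !addr0. Qed.
Lemma lin4_e1 n a : lin4 n (Quad 0 a 0 0) = csc a (f1 n).
Proof. by rewrite /lin4 /= !csc0l !addr0 add0r. Qed.
Lemma lin4_e2 n a : lin4 n (Quad 0 0 a 0) = csc a (f2 n).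
Proof. by rewrite /lin4 /= !csc0l !addr0 !add0r. Qed.
Lemma lin4_e3 n a : lin4 n (Quad 0 0 0 a) = csc a (mu n).
Proof. by rewrite /lin4 /= !csc0l !add0r. Qed.

Definition qmul (r : Cplx) (p q : quad) : quad :=
  Quad (q0 p * q0 q + r * q1 p * q1 q + r * q2 p * q2 q - r * r * q3 p * q3 q)
       (q0 p * q1 q + q1 p * q0 q - r * q2 p * q3 q + r * q3 p * q2 q)
       (q0 p * q2 q + q2 p * q0 q + r * q1 p * q3 q - r * q3 p * q1 q)
       (q0 p * q3 q + q3 p * q0 q + q1 p * q2 q - q2 p * q1 q).


Lemma t11 n : cmul (f1 n) (f1 n) = csc (rsign n) (cone _). Proof. by rewrite f1f1 cscal_csc. Qed.
Lemma t22 n : cmul (f2 n) (f2 n) = csc (rsign n) (cone _). Proof. by rewrite f2f2 cscal_csc. Qed.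
Lemma t12 n : cmul (f1 n) (f2 n) = mu n. Proof. by []. Qed.
Lemma t21 n : cmul (f2 n) (f1 n) = - mu n. Proof. by rewrite f2f1. Qed.
Lemma t13 n : cmul (f1 n) (mu n) = csc (rsign n) (f2 n).
Proof. by rewrite /mu cmulA t11 cmul_csc_l cmul1l. Qed.
Lemma t23 n : cmul (f2 n) (mu n) = - csc (rsign n) (f1 n).
Proof. by rewrite /mu cmulA t21 cmulNl /mu -cmulA t22 cmul_csc_r cmul1r. Qed.
Lemma t31 n : cmul (mu n) (f1 n) = - csc (rsign n) (f2 n).
Proof. by rewrite {1}/mu -cmulA t21 cmulNr t13. Qed.
Lemma t32 n : cmul (mu n) (f2 n) = csc (rsign n) (f1 n).
Proof. by rewrite {1}/mu -cmulA t22 cmul_csc_r cmul1r. Qed.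
Lemma t33 n : cmul (mu n) (mu n) = - csc (rsign n * rsign n) (cone _).
Proof. by rewrite {1}/mu -cmulA t23 cmulNr cmul_csc_r t11 csc_mul. Qed.

Lemma lin4M n p q : cmul (lin4 n p) (lin4 n q) = lin4 n (qmul (rsign n) p q).
Proof.
case: p => a0 a1 a2 a3; case: q => b0 b1 b2 b3.
rewrite {1 2}/lin4 /= !cmulDl !cmulDr !cmul_csc_l !cmul_csc_r !csc_mul.
rewrite !cmul1l !cmul1r t11 t22 t12 t21 t13 t23 t31 t32 t33.
rewrite ?cscN -?cscNl !csc_mul.
rewrite -(lin4_e0 n) -!(lin4_e1 n) -!(lin4_e2 n) -!(lin4_e3 n) -!(lin4_e0 n).
rewrite !lin4D /qmul /=; move: (rsign n) => r.
by apply: lin4_ext => /=; ring.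
Qed.

Lemma cmxmul_scalar_r m a b (A : 'M[clif m]_(a, b)) x :
  cmxmul A (cmx_scalar b x) = \matrix_(i, j) cmul (A i j) x.
Proof.
apply/matrixP => i j; rewrite !mxE (bigD1 j) //= big1 ?addr0.
  by rewrite mxE eqxx.
by move=> l /negbTE h; rewrite mxE h cmul0r.
Qed.

Lemma cmx_lmulE m a b (c : clif m) (M : 'M[clif m]_(a, b)) i j :
  cmx_lmul c M i j = cmul c (M i j).
Proof. by rewrite mxE. Qed.
Lemma cmx_rmulE m a b (c : clif m) (M : 'M[clif m]_(a, b)) i j :
  cmx_rmul M c i j = cmul (M i j) c.
Proof. by rewrite mxE. Qed.

Lemma term_simp m c (U V p a q : clif m) :
  cmul (cmul (cmul (cscal m c) (cmul U p)) a) (cmul (cscal m c) (cmul q V))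
  = csc (c * c) (cmul U (cmul (cmul (cmul p a) q) V)).
Proof.
rewrite !cmul_cscal_l cmul_csc_l cmul_csc_r cmul_csc_l csc_mul.
by rewrite -!cmulA.
Qed.

Lemma sum_sandwich m k c (U V : clif m) (F : 'I_k -> clif m) :
  \sum_l csc c (cmul U (cmul (F l) V)) = csc c (cmul U (cmul (\sum_l F l) V)).
Proof. by rewrite cmul_suml cmul_sumr csc_sum. Qed.

Definition Mmid m k (lP lQ : 'M[clif m]_k) (a : clif m) : 'M[clif m]_k :=
  \matrix_(i, j) \sum_l cmul (cmul (lP i l) a) (lQ l j).

Lemma entry_gen m k c (U11 U12 U21 U22 V11 V12 V21 V22 a : clif m)
    (lP lQ : 'M[clif m]_k) :
  cmxmul (cmxmul (cmx_lmul (cscal m c) (block_mx (cmx_lmul U11 lP) (cmx_lmul U12 lP)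
                                                (cmx_lmul U21 lP) (cmx_lmul U22 lP)))
                 (cmx_scalar _ a))
         (cmx_lmul (cscal m c) (block_mx (cmx_rmul lQ V11) (cmx_rmul lQ V12)
                                         (cmx_rmul lQ V21) (cmx_rmul lQ V22)))
  = block_mx
      (\matrix_(i, j) csc (c * c) (cmul U11 (cmul (Mmid lP lQ a i j) V11)
                                 + cmul U12 (cmul (Mmid lP lQ a i j) V21)))
      (\matrix_(i, j) csc (c * c) (cmul U11 (cmul (Mmid lP lQ a i j) V12)
                                 + cmul U12 (cmul (Mmid lP lQ a i j) V22)))
      (\matrix_(i, j) csc (c * c) (cmul U21 (cmul (Mmid lP lQ a i j) V11)
                                 + cmul U22 (cmul (Mmid lP lQ a i j) V21)))
      (\matrix_(i, j) csc (c * c) (cmul U21 (cmul (Mmid lP lQ a i j) V12)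
                                 + cmul U22 (cmul (Mmid lP lQ a i j) V22))).
Proof.
rewrite cmxmul_scalar_r; apply/matrixP => i j; rewrite /cmxmul mxE.
rewrite big_split_ord /=.
have hM : forall i j, Mmid lP lQ a i j = \sum_l cmul (cmul (lP i l) a) (lQ l j).
  by move=> i0 j0; rewrite mxE.
case: (split_ordP i) => {}i ->; case: (split_ordP j) => {}j ->;
  rewrite ?block_mxEul ?block_mxEur ?block_mxEdl ?block_mxEdr mxE cscD hM -!sum_sandwich;
  congr (_ + _); apply: eq_bigr => l _;
  rewrite mxE !cmx_lmulE ?block_mxEul ?block_mxEur ?block_mxEdl ?block_mxEdr
     ?cmx_lmulE ?cmx_rmulE term_simp.
all: done.
Qed.

Lemma term_simp2 m c (U V p q : clif m) :
  cmul (cmul (cscal m c) (cmul q V)) (cmul (cscal m c) (cmul U p))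
  = csc (c * c) (cmul (cmul q (cmul V U)) p).
Proof.
rewrite !cmul_cscal_l cmul_csc_l cmul_csc_r csc_mul.
by rewrite -!cmulA.
Qed.

Definition Nmid m k (lQ lP : 'M[clif m]_k) (W : clif m) : 'M[clif m]_k :=
  \matrix_(i, j) \sum_l cmul (cmul (lQ i l) W) (lP l j).

Lemma entry_gen2 m k c (U11 U12 U21 U22 V11 V12 V21 V22 : clif m)
    (lP lQ : 'M[clif m]_k) :
  cmxmul (cmx_lmul (cscal m c) (block_mx (cmx_rmul lQ V11) (cmx_rmul lQ V12)
                                         (cmx_rmul lQ V21) (cmx_rmul lQ V22)))
         (cmx_lmul (cscal m c) (block_mx (cmx_lmul U11 lP) (cmx_lmul U12 lP)
                                         (cmx_lmul U21 lP) (cmx_lmul U22 lP)))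
  = block_mx
      (\matrix_(i, j) csc (c * c) (Nmid lQ lP (cmul V11 U11) i j + Nmid lQ lP (cmul V12 U21) i j))
      (\matrix_(i, j) csc (c * c) (Nmid lQ lP (cmul V11 U12) i j + Nmid lQ lP (cmul V12 U22) i j))
      (\matrix_(i, j) csc (c * c) (Nmid lQ lP (cmul V21 U11) i j + Nmid lQ lP (cmul V22 U21) i j))
      (\matrix_(i, j) csc (c * c) (Nmid lQ lP (cmul V21 U12) i j + Nmid lQ lP (cmul V22 U22) i j)).
Proof.
apply/matrixP => i j; rewrite /cmxmul mxE.
rewrite big_split_ord /=.
have hN : forall W i j, Nmid lQ lP W i j = \sum_l cmul (cmul (lQ i l) W) (lP l j).
  by move=> W i0 j0; rewrite mxE.
case: (split_ordP i) => {}i ->; case: (split_ordP j) => {}j ->;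
  rewrite ?block_mxEul ?block_mxEur ?block_mxEdl ?block_mxEdr mxE cscD !hN !csc_sum;
  congr (_ + _); apply: eq_bigr => l _;
  rewrite !cmx_lmulE ?block_mxEul ?block_mxEur ?block_mxEdl ?block_mxEdr
     ?cmx_lmulE ?cmx_rmulE term_simp2.
all: done.
Qed.

Lemma ebig_f1 n : ebig n n.+1 = f1 n.
Proof. by rewrite ebig_blade // f1_blade. Qed.

Lemma X_lin4 n (s : Cplx) :
  cone n.+2 + cmul (cscal n.+2 s^-1) (ebig n n.+1) = lin4 n (Quad 1 s^-1 0 0).
Proof. by rewrite /lin4 /= !csc0l !addr0 csc1 cmul_cscal_l ebig_f1. Qed.

Lemma Xb_lin4 n (s : Cplx) :
  cone n.+2 - cmul (cscal n.+2 s^-1) (ebig n n.+1) = lin4 n (Quad 1 (- s^-1) 0 0).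
Proof. by rewrite /lin4 /= !csc0l !addr0 csc1 cmul_cscal_l ebig_f1 cscNl. Qed.

Lemma Y_lin4 n (s : Cplx) :
  f2 n - cmul (cscal n.+2 s^-1) (mu n) = lin4 n (Quad 0 0 1 (- s^-1)).
Proof. by rewrite /lin4 /= !csc0l !add0r csc1 cmul_cscal_l cscNl. Qed.

Lemma Z_lin4 n (s : Cplx) :
  cmul (cscal n.+2 (rsign n)^-1) (f2 n + cmul (cscal n.+2 s^-1) (mu n))
  = lin4 n (Quad 0 0 (rsign n)^-1 ((rsign n)^-1 * s^-1)).
Proof.
by rewrite /lin4 /= !csc0l !add0r !cmul_cscal_l cscD csc_mul.
Qed.

Lemma mid_comm m (p la g q : clif m) : cmul q g = cmul g q ->
  cmul (cmul p (cmul la g)) q = cmul (cmul (cmul p la) q) g.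
Proof. by move=> hg; rewrite -!cmulA hg. Qed.

Lemma phi_sum n k (Pn Pninv : 'M[clif n]_k) x i j :
  is_cscal ((cmxmul (cmxmul Pn (cmx_scalar k x)) Pninv) i j) ->
  \sum_l cmul (cmul (Pn i l) x) (Pninv l j) = cscal n (phi Pn Pninv x i j).
Proof.
rewrite /is_cscal => h.
have e : (cmxmul (cmxmul Pn (cmx_scalar k x)) Pninv) i j
   = \sum_l cmul (cmul (Pn i l) x) (Pninv l j).
  by rewrite cmxmul_scalar_r /cmxmul mxE; apply: eq_bigr => l _; rewrite mxE.
rewrite /phi mxE /cpart -e; exact: h.
Qed.

Lemma Msum n k (Pn Pninv : 'M[clif n]_k) (a0 a1 a2 a3 : clif n) i j :
  ~~ odd n ->
  (forall x, is_cscal ((cmxmul (cmxmul Pn (cmx_scalar k x)) Pninv) i j)) ->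
  Mmid (map_mx (@lift_clif n) Pn) (map_mx (@lift_clif n) Pninv)
       (lift_clif a0 + cmul (lift_clif a1) (f1 n)
            + cmul (lift_clif a2) (f2 n) + cmul (lift_clif a3) (mu n)) i j
  = lin4 n (Quad (phi Pn Pninv a0 i j) (phi Pn Pninv a1 i j)
                 (phi Pn Pninv a2 i j) (phi Pn Pninv a3 i j)).
Proof.
move=> hn hphi; rewrite mxE.
under eq_bigr do rewrite !mxE !cmulDr !cmulDl.
rewrite !big_split /=.
have hT : forall (g : clif n.+2) x,
    (forall y, cmul (lift_clif y) g = cmul g (lift_clif y)) ->
    \sum_l cmul (cmul (lift_clif (Pn i l)) (cmul (lift_clif x) g)) (lift_clif (Pninv l j))
    = csc (phi Pn Pninv x i j) g.
  move=> g x hg.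
  under eq_bigr do rewrite mid_comm ?hg // -!lift_mul.
  by rewrite -cmul_suml -lift_sum phi_sum // lift_cscal cmul_cscal_l.
rewrite !hT; last by move=> y; rewrite lift_f1.
- under eq_bigr do rewrite -!lift_mul.
  rewrite -lift_sum phi_sum // lift_cscal cscal_csc.
  by [].
- by move=> y; rewrite lift_mu.
- by move=> y; rewrite lift_f2.
Qed.

Lemma part4 (n : nat) (hn : ~~ odd n)
  (Pn Pninv : 'M[clif n]_(2 ^ n./2))
  (hphi : forall (a : clif n) (i j : 'I_(2 ^ n./2)),
      is_cscal ((cmxmul (cmxmul Pn (cmx_scalar (2 ^ n./2) a)) Pninv) i j))
  (s : Cplx) (hs : s ^+ 2 = rsign n) :
    forall (a : clif n.+2) (a0 a1 a2 a3 : clif n),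
        a = lift_clif a0 + cmul (lift_clif a1) (f1 n)
            + cmul (lift_clif a2) (f2 n) + cmul (lift_clif a3) (mu n) ->
        cmxmul (cmxmul (Pnext s Pn) (cmx_scalar _ a)) (Pprime s Pninv)
        = map_mx (cscal n.+2)
            (block_mx
               (phi Pn Pninv a0 + s *: phi Pn Pninv a1)
               (rsign n *: (phi Pn Pninv a2 + s *: phi Pn Pninv a3))
               (phi Pn Pninv a2 - s *: phi Pn Pninv a3)
               (phi Pn Pninv a0 - s *: phi Pn Pninv a1)).
Proof.
move=> a a0 a1 a2 a3 ha.
rewrite /Pnext /Pprime entry_gen map_block_mx.
rewrite X_lin4 Xb_lin4 Y_lin4 Z_lin4.
set p0 := phi Pn Pninv a0; set p1 := phi Pn Pninv a1.
set p2 := phi Pn Pninv a2; set p3 := phi Pn Pninv a3.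
have hM : forall i j, Mmid (map_mx (@lift_clif n) Pn) (map_mx (@lift_clif n) Pninv) a i j
   = lin4 n (Quad (p0 i j) (p1 i j) (p2 i j) (p3 i j)).
  by move=> i j; rewrite ha Msum.
clearbody p0 p1 p2 p3.
have s0 : s != 0.
  apply/negP => /eqP e; move: hs; rewrite e expr0n /= /rsign => /esym /eqP.
  by rewrite expf_eq0 oppr_eq0 oner_eq0 andbF.
congr block_mx; apply/matrixP => i j; rewrite mxE hM !lin4M !lin4D lin4Z !mxE.
all: rewrite cscal_csc -lin4_e0; apply: lin4_ext => /=; rewrite -hs.
all: by field.
Qed.

Lemma cscal0 m : cscal m 0 = 0.
Proof. by apply/ffunP => S; rewrite cscalE czeroE; case: ifP. Qed.

Lemma cmx1_block m k1 k2 :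
  cmx1 m (k1 + k2) = block_mx (cmx1 m k1) 0 0 (cmx1 m k2).
Proof.
apply/matrixP => i j; rewrite /cmx1 /cmx_scalar mxE.
case: (split_ordP i) => {}i ->; case: (split_ordP j) => {}j ->;
  rewrite ?block_mxEul ?block_mxEur ?block_mxEdl ?block_mxEdr ?mxE ?eq_shift //.
Qed.

Lemma cmxmul1 m a b (A : 'M[clif m]_(a, b)) : cmxmul A (cmx_scalar b (cone m)) = A.
Proof. by rewrite cmxmul_scalar_r; apply/matrixP => i j; rewrite mxE cmul1r. Qed.

Lemma phiE n k (Pn Pninv : 'M[clif n]_k) x i j :
  phi Pn Pninv x i j = (\sum_l cmul (cmul (Pn i l) x) (Pninv l j)) set0.
Proof.
rewrite /phi mxE /cpart cmxmul_scalar_r /cmxmul mxE.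
by congr (fun_of_fin _ _); apply: eq_bigr => l _; rewrite mxE.
Qed.

Lemma phi0 n k (Pn Pninv : 'M[clif n]_k) : phi Pn Pninv 0 = 0.
Proof.
apply/matrixP => i j; rewrite phiE mxE big1 ?czeroE // => l _.
by rewrite cmul0r cmul0l.
Qed.

Lemma phi1 n k (Pn Pninv : 'M[clif n]_k) : cmx_inverse Pn Pninv ->
  phi Pn Pninv (cone n) = 1%:M.
Proof.
move=> [h1 _]; apply/matrixP => i j; rewrite phiE.
under eq_bigr do rewrite cmul1r.
have -> : \sum_l cmul (Pn i l) (Pninv l j) = cmxmul Pn Pninv i j by rewrite mxE.
rewrite h1 /cmx1 /cmx_scalar !mxE; case: eqP => _; first by rewrite /cone cscalE eqxx.
by rewrite czeroE.
Qed.

Lemma Nblock n k (Pn Pninv : 'M[clif n]_k) (W1 W2 : clif n.+2) c i j :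
  cmx_inverse Pn Pninv -> W1 + W2 = csc c (cone _) ->
  Nmid (map_mx (@lift_clif n) Pninv) (map_mx (@lift_clif n) Pn) W1 i j
  + Nmid (map_mx (@lift_clif n) Pninv) (map_mx (@lift_clif n) Pn) W2 i j
  = csc c (if i == j then cone _ else 0).
Proof.
move=> [_ h2] hW; rewrite !mxE -big_split /=.
under eq_bigr do rewrite -cmulDl -cmulDr hW cmul_csc_r cmul_csc_l cmul1r !mxE -lift_mul.
rewrite -csc_sum -lift_sum.
have -> : \sum_l cmul (Pninv i l) (Pn l j) = cmxmul Pninv Pn i j by rewrite mxE.
rewrite h2 /cmx1 /cmx_scalar mxE; case: eqP => _; first by rewrite lift_cone.
by rewrite cllift0.
Qed.

Theorem theorem15 (n : nat) (hn : ~~ odd n)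
  (Pn Pninv : 'M[clif n]_(2 ^ n./2))
  (hPinv : cmx_inverse Pn Pninv)
  (hphi : forall (a : clif n) (i j : 'I_(2 ^ n./2)),
      is_cscal ((cmxmul (cmxmul Pn (cmx_scalar (2 ^ n./2) a)) Pninv) i j))
  (s : Cplx) (hs : s ^+ 2 = rsign n) :
  [/\ [/\ cmul (f1 n) (f1 n) = cscal n.+2 (rsign n),
          cmul (f2 n) (f2 n) = cscal n.+2 (rsign n)
        & mu n = - cmul (f2 n) (f1 n)],
      forall a : clif n.+2, exists a0 a1 a2 a3 : clif n,
        a = lift_clif a0 + cmul (lift_clif a1) (f1 n)
            + cmul (lift_clif a2) (f2 n) + cmul (lift_clif a3) (mu n),
      cmx_inverse (Pnext s Pn) (Pprime s Pninv)
    & forall (a : clif n.+2) (a0 a1 a2 a3 : clif n),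
        a = lift_clif a0 + cmul (lift_clif a1) (f1 n)
            + cmul (lift_clif a2) (f2 n) + cmul (lift_clif a3) (mu n) ->
        cmxmul (cmxmul (Pnext s Pn) (cmx_scalar _ a)) (Pprime s Pninv)
        = map_mx (cscal n.+2)
            (block_mx
               (phi Pn Pninv a0 + s *: phi Pn Pninv a1)
               (rsign n *: (phi Pn Pninv a2 + s *: phi Pn Pninv a3))
               (phi Pn Pninv a2 - s *: phi Pn Pninv a3)
               (phi Pn Pninv a0 - s *: phi Pn Pninv a1))].
Proof.
have s0 : s != 0.
  apply/negP => /eqP e; move: hs; rewrite e expr0n /= /rsign => /esym /eqP.
  by rewrite expf_eq0 oppr_eq0 oner_eq0 andbF.
split.
- by split; [exact: f1f1 | exact: f2f2 | exact: mu_neg].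
- by move=> a; exact: (decomp_all a).
- split.
  + rewrite -(cmxmul1 (Pnext s Pn)).
    rewrite (@part4 n hn Pn Pninv hphi s hs (cone _) (cone n) 0 0 0); last first.
      by rewrite lift_cone cllift0 !cmul0l !addr0.
    rewrite phi0 phi1 // !scaler0 !addr0 !subr0 map_block_mx cmx1_block.
    by congr block_mx; apply/matrixP => i j; rewrite !mxE ?mulr0 ?cscal0 //;
      case: eqP => _ /=; rewrite ?cscal0.
  + rewrite /Pnext /Pprime entry_gen2 cmx1_block.
    rewrite X_lin4 Xb_lin4 Y_lin4 Z_lin4.
    congr block_mx; apply/matrixP => i j; rewrite mxE.
    * rewrite (@Nblock n _ Pn Pninv _ _ 4) //; last first.
        rewrite !lin4M lin4D -lin4_e0; apply: lin4_ext => /=; rewrite ?(esym hs); by field.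
      rewrite csc_mul /cmx1 /cmx_scalar mxE.
      have -> : (2^-1 / 2 * 4 : Cplx) = 1 by field.
      by rewrite csc1.
    * rewrite (@Nblock n _ Pn Pninv _ _ 0) //; last first.
        rewrite !lin4M lin4D -lin4_e0; apply: lin4_ext => /=; rewrite ?(esym hs); by field.
      by rewrite csc0l csc0 mxE.
    * rewrite (@Nblock n _ Pn Pninv _ _ 0) //; last first.
        rewrite !lin4M lin4D -lin4_e0; apply: lin4_ext => /=; rewrite ?(esym hs); by field.
      by rewrite csc0l csc0 mxE.
    * rewrite (@Nblock n _ Pn Pninv _ _ 4) //; last first.
        rewrite !lin4M lin4D -lin4_e0; apply: lin4_ext => /=; rewrite ?(esym hs); by field.
      rewrite csc_mul /cmx1 /cmx_scalar mxE.
      have -> : (2^-1 / 2 * 4 : Cplx) = 1 by field.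
      by rewrite csc1.
- exact: part4.
Qed.
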